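(* Let $X$ be a regular Hausdorff space and $\mathcal{P}$ a family of subsets of $X$. For $r\in\mathbb{N}$ and $P_1,\dots,P_r\in\mathcal{P}$ put $\langle P_1,\dots,P_r\rangle=\{K\in\mathcal{K}(X): K\subset \bigcup_{i=1}^r P_i,\ K\cap P_j\neq\emptyset\ (1\le j\le r)\}$ and $\mathcal{B}=\{\langle P_1,\dots,P_r\rangle: P_i\in\mathcal{P},\ r\in\mathbb{N}\}$. If $\mathcal{P}$ is compact-countable (resp. locally countable, locally finite, compact-finite) in $X$, then $\mathcal{B}$ is compact-countable (resp. locally countable, locally finite, compact-finite) in $\mathcal{K}(X)$. Moreover, if $\mathcal{P}$ consists of closed subsets of $X$, then $\mathcal{B}$ consists of closed subsets of $\mathcal{K}(X)$.
   Context: $\mathcal{K}(X)$ is the space of nonempty compact subsets of $X$ with the Vietoris topology, whose base consists of the sets $\langle U_1,\dots,U_k\rangle=\{K\in\mathcal{K}(X): K\subset\bigcup_{i=1}^k U_i,\ K\cap U_j\neq\emptyset \text{ for all } j\}$ with $U_i$ open in $X$. A family $\{X_\alpha\}$ of subsets of a space $Y$ is compact-countable (resp. compact-finite) if every compact $K\subset Y$ meets only countably (resp. finitely) many $X_\alpha$; locally countable (resp. locally finite) if every point has a neighborhood meeting only countably (resp. finitely) many $X_\alpha$. *)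

(* Defs.v *)
From HB Require Import structures.
From mathcomp Require Import all_boot all_order all_algebra.
From mathcomp Require Import all_classical all_reals all_analysis.
From Stdlib Require List.
Set Implicit Arguments. Unset Strict Implicit. Unset Printing Implicit Defensive.
Local Open Scope classical_set_scope.

Definition hyperspace (X : topologicalType) : Type :=
  {K : set X | compact K /\ K !=set0}.

HB.instance Definition _ (X : topologicalType) := gen_eqMixin (hyperspace X).
HB.instance Definition _ (X : topologicalType) := gen_choiceMixin (hyperspace X).

Definition vbox (X : topologicalType) (s : seq (set X)) : set (hyperspace X) :=
  [set K | (forall x, proj1_sig K x -> exists2 P, List.In P s & P x) /\
           (forall P, List.In P s -> proj1_sig K `&` P !=set0)].

Definition vindex (X : topologicalType) : Type := seq (set X).
HB.instance Definition _ (X : topologicalType) := gen_eqMixin (vindex X).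
HB.instance Definition _ (X : topologicalType) := gen_choiceMixin (vindex X).
HB.instance Definition _ (X : topologicalType) :=
  isPointed.Build (vindex X) ([::] : seq (set X)).

(* Vietoris topology: generated by the base of all <U_1,...,U_k>, U_i open *)
HB.instance Definition _ (X : topologicalType) :=
  @isSubBaseTopological.Build (hyperspace X) (vindex X)
    [set s : vindex X | forall U, List.In U s -> open U]
    (fun s : vindex X => vbox s).

Definition compact_countable (Y : topologicalType) (F : set (set Y)) :=
  forall K : set Y, compact K -> countable [set A | F A /\ A `&` K !=set0].
Definition compact_finite (Y : topologicalType) (F : set (set Y)) :=
  forall K : set Y, compact K -> finite_set [set A | F A /\ A `&` K !=set0].
Definition locally_countable (Y : topologicalType) (F : set (set Y)) :=
  forall y : Y, exists2 U, nbhs y U & countable [set A | F A /\ A `&` U !=set0].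
Definition locally_finite (Y : topologicalType) (F : set (set Y)) :=
  forall y : Y, exists2 U, nbhs y U & finite_set [set A | F A /\ A `&` U !=set0].

Definition vbox_family (X : topologicalType) (P : set (set X)) :
    set (set (hyperspace X)) :=
  [set vbox s | s in [set s : seq (set X) | s <> [::] /\ forall A, List.In A s -> P A]].

(* Main.v *)
Require Import Defs.
From HB Require Import structures.
From mathcomp Require Import all_boot all_order all_algebra finmap.
From mathcomp Require Import all_classical all_reals all_analysis.
From Stdlib Require List.
Local Open Scope classical_set_scope.

Definition ptd {X : topologicalType} (x0 : X) : Type := X.
HB.instance Definition _ (X : topologicalType) (x0 : X) := Topological.on (ptd x0).
HB.instance Definition _ (X : topologicalType) (x0 : X) := isPointed.Build (ptd x0) x0.

Lemma compact_coverE (X : topologicalType) (A : set X) :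
  compact A <-> cover_compact A.
Proof.
have [->|/set0P [x0 _]] := eqVneq A set0.
  split=> _; last exact: compact0.
  move=> I D f _ _; exists fset0 => //.
have e := @compact_cover (ptd x0).
split.
  move=> cA; have cA2 : @compact (ptd x0) A := cA.
  by rewrite e in cA2; exact: cA2.
move=> cA; have cA2 : @cover_compact (ptd x0) A := cA.
by rewrite -e in cA2; exact: cA2.
Qed.

Lemma vbox_open (X : topologicalType) (s : seq (set X)) :
  (forall U, List.In U s -> open U) -> open (vbox s).
Proof.
move=> hs.
exists [set vbox s].
  move=> _ ->; exists [fset (s : vindex X)]%fset.
    by move=> i /fset1P ->; rewrite inE.
  by rewrite set_fset1 bigcap_set1.
by rewrite bigcup_set1.
Qed.

Lemma closed_In (X : topologicalType) (s : seq (set X)) :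
  (forall A, List.In A s -> closed A) ->
  closed [set x | exists2 P, List.In P s & P x].
Proof.
elim: s => [|a s IH] hs.
  rewrite (_ : [set x | _] = set0); first exact: closed0.
  by apply/seteqP; split => x // [].
rewrite (_ : [set x | _] = a `|` [set x | exists2 P, List.In P s & P x]).
  apply: closedU; first by apply: hs; left.
  by apply: IH => A As; apply: hs; right.
apply/seteqP; split => x /=.
  by move=> [P [<-|Ps] Px]; [left|right; exists P].
by move=> [ax|[P Ps Px]]; [exists a => //; left|exists P => //; right].
Qed.

Lemma nbhs_of_open (T : topologicalType) (x : T) (U A : set T) :
  open U -> U x -> U `<=` A -> nbhs x A.
Proof. by move=> oU Ux UA; apply: filterS UA _; apply: open_nbhs_nbhs. Qed.

Lemma vbox_closed (X : topologicalType) (s : seq (set X)) :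
  (forall A, List.In A s -> closed A) -> closed (vbox s).
Proof.
move=> hs; rewrite -[vbox s]setCK; apply: open_closedC; rewrite openE => K /= nK.
have [hm|hm] := pselect (forall P, List.In P s -> proj1_sig K `&` P !=set0).
  have : ~ (forall x, proj1_sig K x -> exists2 P, List.In P s & P x).
    by move=> h; apply: nK; split.
  move/existsNP => [x /not_implyP [Kx nx]].
  pose U := [set x | exists2 P, List.In P s & P x].
  apply: (@nbhs_of_open _ _ (vbox [:: setT; ~` U])).
  - apply: vbox_open => V [<-|[<-|[]]]; first exact: openT.
    by rewrite openC; apply: closed_In.
  - split; first by move=> y _; exists setT => //; left.
    move=> V [<-|[<-|[]]]; first by exists x.
    by exists x; split.
  - move=> K' [_ h2] [h3 _].
    have [y [K'y Uy]] := h2 (~` U) (or_intror (or_introl erefl)).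
    by apply: Uy; apply: h3.
move/existsNP: hm => [P /not_implyP [Ps KP]].
apply: (@nbhs_of_open _ _ (vbox [:: ~` P])).
- apply: vbox_open => V [<-|[]]; rewrite openC; exact: hs.
- split; last first.
    move=> V [<-|[]]; case: (proj2_sig K) => _ [x Kx]; exists x; split => // Px.
    by apply: KP; exists x.
  move=> x Kx; exists (~` P); first by left.
  by move=> Px; apply: KP; exists x.
- move=> K' [h1 _] [_ h4].
  have [y [K'y Py]] := h4 P Ps.
  by have [V [<-|[]] Vy] := h1 y K'y.
Qed.

Lemma union_compact (X : topologicalType) (C : set (hyperspace X)) :
  compact C -> compact (\bigcup_(K in C) proj1_sig K).
Proof.
move=> /compact_coverE cC; apply/compact_coverE => I D f fo Lcov.
have h : forall K : hyperspace X, exists D' : {fset I},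
    C K -> {subset D' <= D} /\ proj1_sig K `<=` cover [set` D'] f.
  move=> K; have [CK|nCK] := pselect (C K); last by exists fset0.
  have cK : compact (proj1_sig K) := proj1 (proj2_sig K).
  move/compact_coverE in cK.
  have [D' sD' cov] := cK I D f fo (fun x Kx => Lcov x (ex_intro2 _ _ K CK Kx)).
  by exists D'.
have [g hg] := choice h.
pose V K := cover [set` g K] f.
have Vo K : C K -> open (V K).
  move=> CK; apply: bigcup_open => i /= ig.
  by apply: fo; rewrite -in_setE; exact: (proj1 (hg K CK) i ig).
have Vbo K : C K -> open (vbox [:: V K]).
  by move=> CK; apply: vbox_open => U [<-|[]]; exact: Vo.
have [E sE covE] : finite_subset_cover C (fun K => vbox [:: V K]) C.
  apply: cC => //.
  move=> K CK; exists K => //; split.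
    by move=> x Kx; exists (V K); [left|exact: (proj2 (hg K CK))].
  move=> P [<-|[]]; case: (proj2_sig K) => _ [x Kx]; exists x; split => //.
  exact: (proj2 (hg K CK)).
exists (\bigcup_(K <- E) g K)%fset.
  move=> i /bigfcupP [K /andP [KE _] ig].
  have CK : C K by rewrite -in_setE; exact: sE.
  exact: (proj1 (hg K CK) i ig).
move=> x [K0 CK0 K0x].
have [K KE [h1 _]] := covE K0 CK0.
have [P [<-|[]] [i ig fxi]] := h1 x K0x.
exists i => //=; apply/bigfcupP; exists K => //.
by rewrite andbT.
Qed.

Definition lists (X : topologicalType) (S : set (set X)) :=
  [set s : seq (set X) | forall A, List.In A s -> S A].
Arguments lists {X}.

Lemma InE (T : eqType) (x : T) s : List.In x s <-> x \in s.
Proof.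
elim: s => //= a s IH; rewrite inE; split.
  by move=> [->|/IH h]; [rewrite eqxx|rewrite h orbT].
by move=> /orP [/eqP ->|/IH h]; [left|right].
Qed.

Lemma vbox_eq (X : topologicalType) (s t : seq (set X)) :
  (forall P, List.In P s <-> List.In P t) -> vbox s = vbox t.
Proof.
move=> e; apply/seteqP; split => K [h1 h2]; split.
- by move=> x Kx; have [P Ps Px] := h1 x Kx; exists P => //; apply/e.
- by move=> P Pt; apply: h2; apply/e.
- by move=> x Kx; have [P Ps Px] := h1 x Kx; exists P => //; apply/e.
- by move=> P Pt; apply: h2; apply/e.
Qed.

Lemma countable_lists (X : topologicalType) (S : set (set X)) :
  countable S -> countable (lists S).
Proof.
move/countable_injP => [f finj]; apply/countable_injP.
exists (fun s => choice.pickle (map f s)).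
move=> s t; rewrite !in_setE => hs ht /(pcan_inj pickleK_inv).
elim: s t hs ht => [|a s IH] [|b t] //= hs ht [eab emap].
congr (_ :: _).
  by apply: finj => //; rewrite in_setE; [apply: hs|apply: ht]; left.
by apply: IH => // A HA; [apply: hs|apply: ht]; right.
Qed.

Lemma finite_lists (X : topologicalType) (S : set (set X)) :
  finite_set S -> finite_set (@vbox X @` lists S).
Proof.
move/finite_fsetP => [B ->].
pose g (T : {set B}) : set (hyperspace X) := vbox [seq val x | x <- enum T].
apply: (@sub_finite_set _ _ (g @` setT)); last exact: finite_image finite_finset.
move=> _ [s hs <-]; exists (finset (fun x : B => val x \in s)) => //.
apply: vbox_eq => P; rewrite !InE; split.
  by move=> /mapP [x]; rewrite mem_enum inE => xs ->.
move=> Ps; have PB : P \in B by have := hs P (proj2 (InE _ _ _) Ps).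
apply/mapP; exists [` PB]%fset => //.
by rewrite mem_enum inE.
Qed.

Lemma vbox_meet (X : topologicalType) (P S : set (set X)) (U : set (hyperspace X)) :
  (forall A K, P A -> U K -> proj1_sig K `&` A !=set0 -> S A) ->
  [set B | vbox_family P B /\ B `&` U !=set0] `<=` @vbox X @` lists S.
Proof.
move=> h _ [[s [_ sP] <-] [K [[_ hK] UK]]]; exists s => //.
by move=> A As; apply: (h A K (sP A As) UK (hK A As)).
Qed.

Lemma local_aux (X : topologicalType) (P : set (set X)) (K : hyperspace X)
  (W : X -> set X) : (forall x, open (W x) /\ W x x) ->
  exists E : {fset X}, nbhs K (vbox [:: cover [set` E] W]) /\
    [set B | vbox_family P B /\ B `&` vbox [:: cover [set` E] W] !=set0]
    `<=` @vbox X @` lists (\bigcup_(x in [set` E]) [set A | P A /\ A `&` W x !=set0]).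
Proof.
move=> hW.
have cK : compact (proj1_sig K) := proj1 (proj2_sig K).
move/compact_coverE in cK.
have [E _ KE] := cK X (proj1_sig K) W (fun x _ => proj1 (hW x))
  (fun x Kx => ex_intro2 _ _ x Kx (proj2 (hW x))).
exists E; split.
  apply: open_nbhs_nbhs; split.
    apply: vbox_open => U [<-|[]]; apply: bigcup_open => x _; exact: (proj1 (hW x)).
  split; first by move=> x Kx; exists (cover [set` E] W); [left|exact: KE].
  move=> V [<-|[]]; case: (proj2_sig K) => _ [x Kx]; exists x; split => //.
  exact: KE.
apply: vbox_meet => A K' PA [h1 _] [y [K'y Ay]].
have [V [<-|[]] [x xE Wxy]] := h1 y K'y.
by exists x => //; split => //; exists y.
Qed.

Theorem proposition3p4 (X : topologicalType)
  (hX : hausdorff_space X) (rX : regular_space X) (P : set (set X)) :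
  (compact_countable P -> compact_countable (vbox_family P)) /\
  (locally_countable P -> locally_countable (vbox_family P)) /\
  (locally_finite P -> locally_finite (vbox_family P)) /\
  (compact_finite P -> compact_finite (vbox_family P)) /\
  ((forall A, P A -> closed A) -> forall B, vbox_family P B -> closed B).
Proof.
have cmeet : forall C : set (hyperspace X),
  [set B | vbox_family P B /\ B `&` C !=set0] `<=` @vbox X @` lists
    [set A | P A /\ A `&` \bigcup_(K in C) proj1_sig K !=set0].
  move=> C; apply: vbox_meet => A K PA CK [x [Kx Ax]]; split => //.
  by exists x; split => //; exists K.
split.
  move=> hP C cC; apply: (sub_countable (subset_card_le (cmeet C))).
  apply: (sub_countable (card_image_le _ _)); apply: countable_lists.
  exact: hP _ (@union_compact X C cC).
split.
  move=> hP K.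
  have hW : forall x : X, exists W : set X,
      (open W /\ W x) /\ countable [set A | P A /\ A `&` W !=set0].
    move=> x; have [U xU cU] := hP x; move: xU; rewrite nbhsE => -[W [oW Wx] WU].
    exists W; split => //; apply: (sub_countable (subset_card_le _) cU).
    by move=> A [PA [y [Ay Wy]]]; split => //; exists y; split => //; apply: WU.
  have [W hW'] := choice hW.
  have [E [nE sE]] := @local_aux X P K W (fun x => proj1 (hW' x)).
  exists (vbox [:: cover [set` E] W]) => //.
  apply: (sub_countable (subset_card_le sE)).
  apply: (sub_countable (card_image_le _ _)); apply: countable_lists.
  apply: bigcup_countable; first exact: countable_fset.
  by move=> x _; exact: (proj2 (hW' x)).
split.
  move=> hP K.
  have hW : forall x : X, exists W : set X,
      (open W /\ W x) /\ finite_set [set A | P A /\ A `&` W !=set0].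
    move=> x; have [U xU cU] := hP x; move: xU; rewrite nbhsE => -[W [oW Wx] WU].
    exists W; split => //; apply: (sub_finite_set _ cU).
    by move=> A [PA [y [Ay Wy]]]; split => //; exists y; split => //; apply: WU.
  have [W hW'] := choice hW.
  have [E [nE sE]] := @local_aux X P K W (fun x => proj1 (hW' x)).
  exists (vbox [:: cover [set` E] W]) => //.
  apply: (sub_finite_set sE); apply: finite_lists.
  apply: bigcup_finite; first exact: finite_fset.
  by move=> x _; exact: (proj2 (hW' x)).
split.
  move=> hP C cC; apply: (sub_finite_set (cmeet C)); apply: finite_lists.
  exact: hP _ (@union_compact X C cC).
move=> hcl _ [s [_ sP] <-]; apply: vbox_closed => A As; apply: hcl; exact: sP.
Qed.
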